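(* Let $H$ and $K$ be permutation groups on $[p]$ and $[q]$, and let $G=H\otimes K=\{P_h\otimes P_k: h\in H,k\in K\}$, a permutation group on $[pq]$. Let $M\in\mathbb{R}^{pq\times pq}$ satisfy $MP=PM$ for all $P\in G$, and define $\hat M\in\mathbb{R}^{p^2\times q^2}$ by $$\hat M_{(i'-1)p+i,\,(j'-1)q+j}=M_{(i-1)q+j,\,(i'-1)q+j'}\qquad (i,i'\in[p],\ j,j'\in[q]).$$ Then $\mathrm{rank}(\hat M)\le\min\big(\dim\mathcal{E}(H),\dim\mathcal{E}(K)\big)$.
   Context: For a permutation $g$ of $[m]$, $P_g$ is the $m\times m$ permutation matrix with $(P_g)_{i,j}=1$ iff $i=g(j)$; $\otimes$ denotes the Kronecker product. For a permutation group $L$ on $[m]$, $\mathcal{E}(L)=\{X\in\mathbb{R}^{m\times m}: XP_g=P_gX \text{ for all } g\in L\}$. *)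

(* Defs.v *)
From HB Require Import structures.
From mathcomp Require Import all_boot all_order all_algebra all_fingroup.
Set Implicit Arguments. Unset Strict Implicit. Unset Printing Implicit Defensive.
Import Order.TTheory GRing.Theory Num.Theory.
Local Open Scope ring_scope.

(* 0-based index conventions: [m] is 'I_m; the pair (i, j) with i : 'I_m,
   j : 'I_n corresponds to the index i * n + j of 'I_(m * n)
   (the paper's (i-1)q + j in 1-based indexing). *)
Lemma pidx_proof m n (i : 'I_m) (j : 'I_n) : (i * n + j < m * n)%N.
Proof.
case: i j => i /= Hi [j /= Hj].
apply: (@leq_trans (i * n + n)); first by rewrite ltn_add2l.
by rewrite -mulSnr leq_mul2r Hi orbT.
Qed.
Definition pidx m n (i : 'I_m) (j : 'I_n) : 'I_(m * n) := Ordinal (pidx_proof i j).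

Lemma divord_proof m n (r : 'I_(m * n)) : (r %/ n < m)%N.
Proof. by rewrite ltn_divLR ?(ltn_ord r) //; case: n r => [|n] r //; rewrite muln0 in r; case: r. Qed.
Lemma modord_proof m n (r : 'I_(m * n)) : (r %% n < n)%N.
Proof. by rewrite ltn_mod; case: n r => [|n] r //; rewrite muln0 in r; case: r. Qed.
Definition divord m n (r : 'I_(m * n)) : 'I_m := Ordinal (divord_proof r).
Definition modord m n (r : 'I_(m * n)) : 'I_n := Ordinal (modord_proof r).

Definition Pmx (R : nzRingType) m (g : {perm 'I_m}) : 'M[R]_m :=
  \matrix_(i, j) (i == g j)%:R.

Definition kron (R : nzRingType) m1 n1 m2 n2 (A : 'M[R]_(m1, n1)) (B : 'M[R]_(m2, n2))
  : 'M[R]_(m1 * m2, n1 * n2) :=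
  \matrix_(r, c) (A (divord r) (divord c) * B (modord r) (modord c)).

Definition commSpace (R : fieldType) m (L : {set {perm 'I_m}}) : {vspace 'M[R]_m} :=
  (\bigcap_(g in L) lker (linfun (fun X : 'M[R]_m => X *m Pmx R g - Pmx R g *m X)))%VS.

Definition Mhat (R : nzRingType) p q (M : 'M[R]_(p * q)) : 'M[R]_(p * p, q * q) :=
  \matrix_(r, c) M (pidx (modord r) (modord c)) (pidx (divord r) (divord c)).
Arguments Pmx R {m} g.
Arguments commSpace R {m} L.

(* Main.v *)
Require Import Defs.
From HB Require Import structures.
From mathcomp Require Import all_boot all_order all_algebra all_fingroup.
Import Order.TTheory GRing.Theory Num.Theory.
Local Open Scope ring_scope.

Lemma pidx_eq m n (r : 'I_(m * n)) (a : 'I_m) (b : 'I_n) :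
  (r == pidx a b) = (divord r == a) && (modord r == b).
Proof.
have n0 : (0 < n)%N by case: (n) b => [[]|].
apply/eqP/andP => [-> | [/eqP ea /eqP eb]].
  split; apply/eqP/val_inj => /=.
    by rewrite divnMDl // divn_small // addn0.
  by rewrite modnMDl modn_small.
apply/val_inj => /=; rewrite -ea -eb /=; exact: divn_eq.
Qed.

Lemma sum_delta (R : nzRingType) n (F : 'I_n -> R) t :
  \sum_s F s * (s == t)%:R = F t.
Proof.
rewrite (bigD1 t) //= eqxx mulr1 big1 ?addr0 // => s /negbTE ->; by rewrite mulr0.
Qed.

Lemma sum_deltal (R : nzRingType) n (F : 'I_n -> R) t :
  \sum_s (s == t)%:R * F s = F t.
Proof.
rewrite (bigD1 t) //= eqxx mul1r big1 ?addr0 // => s /negbTE ->; by rewrite mul0r.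
Qed.

Lemma kron_entry (R : nzRingType) p q (h : {perm 'I_p}) (k : {perm 'I_q}) r s :
  kron (Pmx R h) (Pmx R k) r s = (r == pidx (h (divord s)) (k (modord s)))%:R.
Proof. by rewrite !mxE pidx_eq; case: (_ == _); case: (_ == _); rewrite ?mulr1 ?mulr0 ?mul0r. Qed.

Lemma mulPr (R : nzRingType) p q (h : {perm 'I_p}) (k : {perm 'I_q}) (M : 'M[R]_(p * q)) x y :
  (M *m kron (Pmx R h) (Pmx R k)) x y = M x (pidx (h (divord y)) (k (modord y))).
Proof.
rewrite mxE (eq_bigr (fun s => M x s * (s == pidx (h (divord y)) (k (modord y)))%:R)).
  exact: sum_delta.
by move=> s _; rewrite kron_entry.
Qed.

Lemma mulPl (R : nzRingType) p q (h : {perm 'I_p}) (k : {perm 'I_q}) (M : 'M[R]_(p * q)) x y :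
  (kron (Pmx R h) (Pmx R k) *m M) x y = M (pidx ((h^-1)%g (divord x)) ((k^-1)%g (modord x))) y.
Proof.
rewrite mxE (eq_bigr (fun s => (s == pidx ((h^-1)%g (divord x)) ((k^-1)%g (modord x)))%:R * M s y)).
  exact: sum_deltal.
move=> s _; rewrite kron_entry; congr (_%:R * _).
rewrite !pidx_eq; congr (_ && _).
  by apply/eqP/eqP => [-> | ->]; rewrite ?permK ?permKV.
by apply/eqP/eqP => [-> | ->]; rewrite ?permK ?permKV.
Qed.

Lemma Pmx_right (R : nzRingType) m (h : {perm 'I_m}) (X : 'M[R]_m) i j :
  (X *m Pmx R h) i j = X i (h j).
Proof.
rewrite mxE (eq_bigr (fun c => X i c * (c == h j)%:R)) ?sum_delta // => c _.
by rewrite mxE.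
Qed.

Lemma Pmx_left (R : nzRingType) m (h : {perm 'I_m}) (X : 'M[R]_m) i j :
  (Pmx R h *m X) i j = X ((h^-1)%g i) j.
Proof.
rewrite mxE (eq_bigr (fun c => (c == (h^-1)%g i)%:R * X c j)) ?sum_deltal // => c _.
rewrite mxE; congr (_%:R * _).
by rewrite eq_sym (canF_eq (permK h)).
Qed.

Definition commf (R : fieldType) m (g : {perm 'I_m}) (X : 'M[R]_m) :=
  X *m Pmx R g - Pmx R g *m X.
Arguments commf R {m} g X.
Fact commf_linear (R : fieldType) m (g : {perm 'I_m}) : linear (commf R g).
Proof.
move=> a X Y; rewrite /commf mulmxDl mulmxDr -!scalemxAl -!scalemxAr.
by rewrite scalerBr addrACA opprD.
Qed.
HB.instance Definition _ (R : fieldType) m (g : {perm 'I_m}) :=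
  GRing.isLinear.Build R 'M[R]_m 'M[R]_m _ (commf R g) (@commf_linear R m g).

Lemma mem_comm (R : fieldType) m (L : {set {perm 'I_m}}) (X : 'M[R]_m) :
  (forall g, g \in L -> forall i j, X i (g j) = X ((g^-1)%g i) j) ->
  X \in commSpace R L.
Proof.
move=> HX; rewrite memvE; apply/subv_bigcapP => g Hg; rewrite -memvE.
rewrite memv_ker (lfunE (commf R g)) /commf /= subr_eq0; apply/eqP/matrixP => i j.
by rewrite Pmx_right Pmx_left HX.
Qed.

Lemma rank_factor (R : fieldType) m n1 n2 (U : {vspace 'M[R]_m})
  (A : 'M[R]_(n1, n2)) (f g : 'I_n1 -> 'I_m) (Y : 'I_n2 -> 'M[R]_m) :
  (forall c, Y c \in U) -> (forall r c, A r c = Y c (f r) (g r)) ->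
  (\rank A <= \dim U)%N.
Proof.
move=> YU HA.
pose B : 'M[R]_(n1, \dim U) := \matrix_(r, k) (vbasis U)`_k (f r) (g r).
pose C : 'M[R]_(\dim U, n2) := \matrix_(k, c) coord (vbasis U) k (Y c).
have -> : A = B *m C.
  apply/matrixP => r c; rewrite HA mxE (coord_vbasis (YU c)) summxE.
  apply: eq_bigr => k _; rewrite !mxE mulrC.
  done.
exact: leq_trans (mxrankM_maxr _ _) (rank_leq_row _).
Qed.

Theorem mainTheorem4 (R : realFieldType) (p q : nat)
  (H : {group {perm 'I_p}}) (K : {group {perm 'I_q}}) (M : 'M[R]_(p * q)) :
  (forall h k, h \in H -> k \in K ->
     M *m kron (Pmx R h) (Pmx R k) = kron (Pmx R h) (Pmx R k) *m M) ->
  (\rank (Mhat M) <= minn (\dim (commSpace R H)) (\dim (commSpace R K)))%N.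
Proof.
move=> HM; rewrite leq_min; apply/andP; split.
  pose Y (c : 'I_(q * q)) : 'M[R]_p :=
    \matrix_(i, i') M (pidx i (modord c)) (pidx i' (divord c)).
  apply: (@rank_factor _ _ _ _ _ _ (@modord p p) (@divord p p) Y).
    move=> c; apply: mem_comm => h Hh i i'; rewrite !mxE.
    have := congr1 (fun A : 'M[R]_(p * q) => A (pidx i (modord c)) (pidx i' (divord c))) (HM h 1%g Hh (group1 K)).
    rewrite /= mulPr mulPl.
    have E1 a b : divord (pidx a b) = a by apply/eqP; have := eqxx (pidx a b); rewrite pidx_eq => /andP[].
    have E2 a b : modord (pidx a b) = b by apply/eqP; have := eqxx (pidx a b); rewrite pidx_eq => /andP[].
    by rewrite !E1 !E2 invg1 !perm1.
  by move=> r c; rewrite !mxE.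
rewrite -mxrank_tr.
pose Z (r : 'I_(p * p)) : 'M[R]_q :=
  \matrix_(j, j') M (pidx (modord r) j) (pidx (divord r) j').
apply: (@rank_factor _ _ _ _ _ _ (@modord q q) (@divord q q) Z).
  move=> r; apply: mem_comm => k Hk j j'; rewrite !mxE.
  have := congr1 (fun A : 'M[R]_(p * q) => A (pidx (modord r) j) (pidx (divord r) j')) (HM 1%g k (group1 H) Hk).
  rewrite /= mulPr mulPl.
  have E1 a b : divord (pidx a b) = a by apply/eqP; have := eqxx (pidx a b); rewrite pidx_eq => /andP[].
  have E2 a b : modord (pidx a b) = b by apply/eqP; have := eqxx (pidx a b); rewrite pidx_eq => /andP[].
  by rewrite !E1 !E2 invg1 !perm1.
by move=> c r; rewrite !mxE.
Qed.
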